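(* Let $\alpha_0,\alpha_1,\alpha_2\in\mathbb{C}$ with $\alpha_0+\alpha_1+\alpha_2=3$, and let $\tau_0,\tau_1,\tau_2$ be nonvanishing (meromorphic) functions of $x$. Define $$f_i=\frac{\tau_{i+1}'}{\tau_{i+1}}-\frac{\tau_{i+2}'}{\tau_{i+2}}+x\quad(i=0,1,2),\qquad g=\frac{\tau_0'}{\tau_0}+\frac{\tau_1'}{\tau_1}+\frac{\tau_2'}{\tau_2}.$$ Then $(f_0,f_1,f_2)$ satisfies $f_i'+f_i(f_{i+1}-f_{i+2})=\alpha_i$ for $i=0,1,2$ (with $f_0+f_1+f_2=3x$) and $g$ satisfies $2g'+(f_0-x)^2+(f_1-x)^2+(f_2-x)^2=0$ if and only if $$\Big(D_x^2-xD_x-\frac{\alpha_i-\alpha_{i+1}}{3}\Big)\,\tau_i\cdot\tau_{i+1}=0\qquad(i=0,1,2).$$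
   Context: Indices are taken modulo 3 and $'=d/dx$. Hirota's bilinear operators are defined by $P(D_x)\,F\cdot G=P(\partial_y)\big(F(x+y)G(x-y)\big)\big|_{y=0}$ for a constant-coefficient polynomial $P$; thus $D_xF\cdot G=F'G-FG'$ and $D_x^2F\cdot G=F''G-2F'G'+FG''$. *)

(* Defs.v *)
(* with mathcomp-real-closed's complex numbers R[i]
   (R a realType from mathcomp-analysis, so R[i] is the field of complex numbers). *)
From HB Require Import structures.
From mathcomp Require Import all_boot all_order all_algebra.
From mathcomp Require Import complex.
From mathcomp Require Import reals.
Set Implicit Arguments. Unset Strict Implicit. Unset Printing Implicit Defensive.
Import Order.TTheory GRing.Theory Num.Theory.
Local Open Scope ring_scope.

(* A C-linear derivation  ' = d/dx  on a commutative C-algebra K of functions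
   (e.g. the field of meromorphic functions on a domain). *)
Definition is_derivation (C : nzRingType) (K : comUnitAlgType C) (d : K -> K) : Prop :=
  [/\ forall f g : K, d (f + g) = d f + d g,
      forall f g : K, d (f * g) = d f * g + f * d g
    & forall c : C, d (c%:A) = 0].

Definition hirotaD1 (C : nzRingType) (K : comUnitAlgType C) (d : K -> K) (F G : K) : K :=
  d F * G - F * d G.
Definition hirotaD2 (C : nzRingType) (K : comUnitAlgType C) (d : K -> K) (F G : K) : K :=
  d (d F) * G - 2 * (d F * d G) + F * d (d G).

(* Main.v *)
Require Import Defs.
From HB Require Import structures.
From mathcomp Require Import all_boot all_order all_algebra.
From mathcomp Require Import complex.
From mathcomp Require Import reals.
Import Order.TTheory GRing.Theory Num.Theory.
Local Open Scope ring_scope.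
Set Implicit Arguments. Unset Strict Implicit. Unset Printing Implicit Defensive.
From mathcomp Require Import ring.
Lemma core (K : comNzRingType) (u c0 c1 h0 h1 h2 k0 k1 k2 x : K) : 3*u = 1 ->
let c2 := 1 - c0 - c1 in
let f0 := h1 - h2 + x in let f1 := h2 - h0 + x in let f2 := h0 - h1 + x in
let A0 := (k1 - k2 + 1) + f0 * (f1 - f2) - 3 * c0 in
let A1 := (k2 - k0 + 1) + f1 * (f2 - f0) - 3 * c1 in
let A2 := (k0 - k1 + 1) + f2 * (f0 - f1) - 3 * c2 in
let G := 2 * (k0+k1+k2) + ((f0 - x)^+ 2 + (f1 - x)^+ 2 + (f2 - x)^+ 2) in
let E0 := k0 + k1 + (h0 - h1)^+ 2 - x*(h0 - h1) - (c0 - c1) in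
let E1 := k1 + k2 + (h1 - h2)^+ 2 - x*(h1 - h2) - (c1 - c2) in
let E2 := k2 + k0 + (h2 - h0)^+ 2 - x*(h2 - h0) - (c2 - c0) in
[/\ A0 = E0 - E2, A1 = E1 - E0, A2 = E2 - E1, G = E0 + E1 + E2 &
  [/\ E0 = u * (G + A0 - A1), E1 = u * (G + A1 - A2) & E2 = u * (G + A2 - A0)]].
Proof.
move=> H3 c2 f0 f1 f2 A0 A1 A2 G E0 E1 E2.
have e : forall y : K, y = (3 * u) * y by move=> y; rewrite H3 mul1r.
split; rewrite /A0 /A1 /A2 /G /E0 /E1 /E2 /f0 /f1 /f2 /c2; try ring.
split; [rewrite [LHS]e | rewrite [LHS]e | rewrite [LHS]e]; ring.
Qed.

Lemma all3 (P : 'I_3 -> Prop) : (forall i, P i) <-> [/\ P 0, P 1 & P 2].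
Proof.
split; first by move=> H; split; apply: H.
case=> H0 H1 H2 [[|[|[|//]]] Hi].
- by have -> : Ordinal Hi = 0 by apply: val_inj.
- by have -> : Ordinal Hi = 1 by apply: val_inj.
- by have -> : Ordinal Hi = 2 by apply: val_inj.
Qed.

Theorem theorem3p1 (R : realType) (K : comUnitAlgType R[i]) (d : K -> K) (x : K)
    (alpha : 'I_3 -> R[i]) (tau : 'I_3 -> K) :
  is_derivation d ->
  d x = 1 ->
  (forall i, tau i \is a GRing.unit) ->
  alpha 0 + alpha 1 + alpha 2 = 3 ->
  let h := fun i : 'I_3 => d (tau i) / tau i in
  let f := fun i : 'I_3 => h (i + 1) - h (i + 2) + x in
  let g := h 0 + h 1 + h 2 in
  ((forall i : 'I_3, d (f i) + f i * (f (i + 1) - f (i + 2)) = (alpha i)%:A)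
   /\ 2 * d g + ((f 0 - x) ^+ 2 + (f 1 - x) ^+ 2 + (f 2 - x) ^+ 2) = 0)
  <->
  (forall i : 'I_3,
     hirotaD2 d (tau i) (tau (i + 1)) - x * hirotaD1 d (tau i) (tau (i + 1))
     - ((alpha i - alpha (i + 1)) / 3)%:A * (tau i * tau (i + 1)) = 0).
Proof.
move=> [dD dM dC] dx tU asum h f g.
have d0 : d 0 = 0 by have := dC 0; rewrite scale0r.
have dN : forall y, d (- y) = - d y.
  by move=> y; apply/eqP; rewrite -addr_eq0 -dD addNr d0.
have dB : forall y z, d (y - z) = d y - d z by move=> y z; rewrite dD dN.
pose k i := d (h i).
have dt : forall i, d (tau i) = h i * tau i by move=> i; rewrite /h mulrVK.
have ddt : forall i, d (d (tau i)) = (k i + h i ^+ 2) * tau i.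
  by move=> i; rewrite {1}dt dM dt /k; ring.
have df : forall i, d (f i) = k (i+1) - k (i+2) + 1 by move=> i; rewrite /f dD dB dx.
have dg : d g = k 0 + k 1 + k 2 by rewrite /g !dD.
pose c i := (alpha i / 3)%:A : K.
pose u := (3^-1 : R[i])%:A : K.
have n3 : (3 : R[i]) != 0 by rewrite pnatr_eq0.
have sc : forall a b : R[i], (a * b)%:A = a%:A * b%:A :> K.
  by move=> a b; rewrite -scalerAl mul1r scalerA.
have A3 : forall a : R[i], (3 : R[i])%:A = 3 :> K.
  by move=> _; rewrite scaler_nat.
have H3u : 3 * u = 1.
  by rewrite -(A3 0) -sc divff // scale1r.
have ac : forall i, (alpha i)%:A = 3 * c i.
  by move=> i; rewrite /c -(A3 0) -sc mulrC divfK.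
have Hs : c 0 + c 1 + c 2 = 1.
  have e : alpha 0 / 3 + alpha 1 / 3 + alpha 2 / 3 = 1 by rewrite -!mulrDl asum divff.
  transitivity ((alpha 0 / 3 + alpha 1 / 3 + alpha 2 / 3)%:A : K); first by rewrite !scalerDl.
  by rewrite e scale1r.
have c2 : c 2 = 1 - c 0 - c 1 by rewrite -Hs; ring.
have cd : forall i j, ((alpha i - alpha j) / 3)%:A = c i - c j :> K.
  by move=> i j; rewrite /c mulrBl scalerBl.
have hir : forall i j, hirotaD2 d (tau i) (tau j) - x * hirotaD1 d (tau i) (tau j)
     - ((alpha i - alpha j) / 3)%:A * (tau i * tau j) =
     (tau i * tau j) * (k i + k j + (h i - h j)^+ 2 - x * (h i - h j) - (c i - c j)).
  by move=> i j; rewrite /hirotaD2 /hirotaD1 !ddt !dt cd; ring.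
have E0 : forall i j (y : K), (tau i * tau j * y = 0) <-> y = 0.
  move=> i j y; split; last by move=> ->; rewrite mulr0.
  have U : tau i * tau j \is a GRing.unit by rewrite unitrM !tU.
  by move=> H; apply: (mulrI U); rewrite H mulr0.
have o01 : (0 + 1 : 'I_3) = 1 by apply: val_inj.
have o02 : (0 + 2 : 'I_3) = 2 by apply: val_inj.
have o11 : (1 + 1 : 'I_3) = 2 by apply: val_inj.
have o12 : (1 + 2 : 'I_3) = 0 by apply: val_inj.
have o21 : (2 + 1 : 'I_3) = 0 by apply: val_inj.
have o22 : (2 + 2 : 'I_3) = 1 by apply: val_inj.
have C := core (c 0) (c 1) (h 0) (h 1) (h 2) (k 0) (k 1) (k 2) x H3u.
move: C; cbv zeta => -[eA0 eA1 eA2 eG [eE0 eE1 eE2]].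
have oo := (o01, o02, o11, o12, o21, o22).
rewrite !all3 /= !hir !df !ac /f dg !oo c2.
split.
  case=> [[A0 A1 A2] G].
  move/eqP: A0; rewrite -subr_eq0 => /eqP A0.
  move/eqP: A1; rewrite -subr_eq0 => /eqP A1.
  move/eqP: A2; rewrite -subr_eq0 => /eqP A2.
  split; apply/E0.
  - by rewrite eE0 A0 A1 G !(addr0, subr0) mulr0.
  - by rewrite eE1 A1 A2 G !(addr0, subr0) mulr0.
  - by rewrite eE2 A2 A0 G !(addr0, subr0) mulr0.
case=> /E0 B0 /E0 B1 /E0 B2.
split; last by rewrite eG B0 B1 B2 !addr0.
split; apply/eqP; rewrite -subr_eq0; apply/eqP.
- by rewrite eA0 B0 B2 subr0.
- by rewrite eA1 B1 B0 subr0.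
- by rewrite eA2 B2 B1 subr0.
Qed.
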